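(* A smooth cubic surface over $\mathbb{Q}$ that does not contain three pairwise disjoint lines defined over $\mathbb{Q}$ cannot contain exactly four lines defined over $\mathbb{Q}$.
   Context: A line on the surface is defined over $\mathbb{Q}$ if it is cut out by linear forms with rational coefficients and is contained in the surface. *)

(* Defs.v *)
From HB Require Import structures.
From mathcomp Require Import all_boot all_order all_algebra all_field.
From mathcomp Require Import mpoly.
Set Implicit Arguments. Unset Strict Implicit. Unset Printing Implicit Defensive.
Import GRing.Theory Num.Theory.
Local Open Scope ring_scope.

(* Projective 3-space P^3 has homogeneous coordinates indexed by 'I_4.
   A cubic surface over Q is the zero locus of a cubic form
   F : {mpoly rat[4]} (homogeneous of degree 3).  Geometric notions
   (smoothness, containment of a line) are tested over algC, an
   algebraic closure of Q. *)

Definition FC (F : {mpoly rat[4]}) : {mpoly algC[4]} := map_mpoly ratr F.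

Definition cubic_form (F : {mpoly rat[4]}) : Prop := F \is 3.-homog.

Definition smooth_surface (F : {mpoly rat[4]}) : Prop :=
  forall x : 'I_4 -> algC, (exists i, x i != 0) ->
    ~ ((FC F).@[x] = 0 /\ forall i : 'I_4, (mderiv i (FC F)).@[x] = 0).

(* A line of P^3 defined over Q: the projectivisation of a 2-dimensional
   subspace W of Q^4 (equivalently, cut out by two independent rational
   linear forms, namely the annihilator of W). *)
Definition Qline (W : {vspace 'rV[rat]_4}) : Prop := \dim W = 2%N.

(* W (over Q) is contained in the surface: F vanishes on every Qbar-point of
   the line, i.e. on every algC-linear combination of vectors of W. *)
Definition line_in_surface (F : {mpoly rat[4]}) (W : {vspace 'rV[rat]_4}) : Prop :=
  forall s : seq (algC * 'rV[rat]_4), all (fun p => p.2 \in W) s ->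
    (FC F).@[fun i => \sum_(p <- s) p.1 * ratr (p.2 0 i)] = 0.

Definition Qline_on (F : {mpoly rat[4]}) (W : {vspace 'rV[rat]_4}) : Prop :=
  Qline W /\ line_in_surface F W.

(* two projective lines are disjoint iff the underlying planes meet in 0
   (intersection commutes with extension of scalars to Qbar) *)
Definition disjoint_lines (W1 W2 : {vspace 'rV[rat]_4}) : Prop :=
  (W1 :&: W2)%VS = 0%VS.

Definition has_three_disjoint_Qlines (F : {mpoly rat[4]}) : Prop :=
  exists W1 W2 W3, [/\ Qline_on F W1, Qline_on F W2, Qline_on F W3 &
    [/\ disjoint_lines W1 W2, disjoint_lines W1 W3 & disjoint_lines W2 W3]].

Definition exactly_n_Qlines (F : {mpoly rat[4]}) (n : nat) : Prop :=
  exists s : seq {vspace 'rV[rat]_4},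
    [/\ uniq s, size s = n & forall W, W \in s <-> Qline_on F W].

(* Main.v *)
Require Import Defs.
From HB Require Import structures.
From mathcomp Require Import all_boot all_order all_algebra all_field.
From mathcomp Require Import mpoly.
From mathcomp Require Import ring lra zify.
Set Implicit Arguments. Unset Strict Implicit. Unset Printing Implicit Defensive.
Import GRing.Theory Num.Theory.
Local Open Scope ring_scope.



Definition pt (U A B : 'I_4 -> algC) (x y z : algC) : 'I_4 -> algC :=
  fun k => x * U k + y * A k + z * B k.
Definition v3 (x y z : algC) : 'I_3 -> algC := fun k => [:: x; y; z]`_k.
Definition o0 : 'I_3 := @Ordinal 3 0 isT.
Definition o1 : 'I_3 := @Ordinal 3 1 isT.
Definition o2 : 'I_3 := @Ordinal 3 2 isT.

Lemma homog_prodX (n k : nat) (R : comNzRingType) (L : 'I_n -> {mpoly R[k]}) (m : 'I_n -> nat) (s : seq 'I_n) :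
  (forall j, L j \is 1.-homog) ->
  \prod_(i <- s) L i ^+ m i \is (\sum_(i <- s) m i)%N.-homog.
Proof.
move=> hL; elim: s => [|i s IH]; first by rewrite !big_nil dhomog1.
rewrite !big_cons; apply: dhomogM => //.
by have := dhomogMn (m i) (hL i); rewrite mul1n.
Qed.

Lemma expand d (p : {mpoly algC[4]}) U A B : p \is d.-homog ->
  exists Q : {mpoly algC[3]}, Q \is d.-homog /\
   forall x y z, p.@[pt U A B x y z] = Q.@[v3 x y z].
Proof.
move=> hp.
pose L k : {mpoly algC[3]} := U k *: 'X_o0 + A k *: 'X_o1 + B k *: 'X_o2.
have hL k : L k \is 1.-homog.
  rewrite /L !dhomogD ?dhomogZ ?dhomogX //; apply/eqP; apply: mdeg1.
exists (p \mPo [tuple L k | k < 4]); split.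
  rewrite comp_mpolyEX big_seq.
  apply: (big_ind (fun q : {mpoly algC[3]} => q \is d.-homog)); first exact: dhomog0.
    by move=> ? ? hx hy; exact: (dhomogD hx hy).
  move=> m hm; apply: dhomogZ; rewrite comp_mpolyX.
  have -> : d = (\sum_(i <- index_enum 'I_4) m i)%N.
    by rewrite -(dhomog_mf hp hm); apply: mdegE.
  apply: homog_prodX => k; rewrite tnth_mktuple; exact: hL.
move=> x y z; rewrite comp_mpoly_meval; apply: meval_eq => k.
rewrite tnth_mktuple /L !mevalD !mevalZ !mevalXU /pt /v3 /=.
by rewrite mulrC [A k * _]mulrC [B k * _]mulrC.
Qed.



Definition Cub (c : nat -> nat -> algC) (x y z : algC) : algC :=
  c 3%N 0%N * x^+3 + c 2%N 1%N * x^+2 * y + c 2%N 0%N * x^+2 * z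
  + c 1%N 2%N * x * y^+2 + c 1%N 1%N * x * y * z + c 1%N 0%N * x * z^+2
  + c 0%N 3%N * y^+3 + c 0%N 2%N * y^+2 * z + c 0%N 1%N * y * z^+2 + c 0%N 0%N * z^+3.

Definition Quad (c : nat -> nat -> algC) (x y z : algC) : algC :=
  c 2%N 0%N * x^+2 + c 1%N 1%N * x * y + c 1%N 0%N * x * z
  + c 0%N 2%N * y^+2 + c 0%N 1%N * y * z + c 0%N 0%N * z^+2.

Lemma monom_cub (i j k : nat) : (i + j + k = 3)%N ->
  exists c, forall x y z, x^+i * y^+j * z^+k = Cub c x y z.
Proof.
move=> h; exists (fun a b => ((a == i) && (b == j))%:R) => x y z.
rewrite /Cub.
case: i h => [|[|[|[|i]]]] h; case: j h => [|[|[|[|j]]]] h;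
  case: k h => [|[|[|[|k]]]] h; try (exfalso; lia).
all: rewrite /=; ring.
Qed.

Lemma monom_quad (i j k : nat) : (i + j + k = 2)%N ->
  exists c, forall x y z, x^+i * y^+j * z^+k = Quad c x y z.
Proof.
move=> h; exists (fun a b => ((a == i) && (b == j))%:R) => x y z.
rewrite /Quad.
case: i h => [|[|[|i]]] h; case: j h => [|[|[|j]]] h;
  case: k h => [|[|[|k]]] h; try (exfalso; lia).
all: rewrite /=; ring.
Qed.

Lemma cub_rep (Q : {mpoly algC[3]}) : Q \is 3.-homog ->
  exists c, forall x y z, Q.@[v3 x y z] = Cub c x y z.
Proof.
move=> hQ.
suff: forall s : seq 'X_{1..3}, (forall m, m \in s -> mdeg m = 3%N) ->
  exists c, forall x y z, (\sum_(m <- s) Q@_m *: 'X_[m]).@[v3 x y z] = Cub c x y z.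
  move=> /(_ (msupp Q)) H; case: H => [m hm|c hc]; first exact: (dhomog_mf hQ hm).
  by exists c => x y z; rewrite {1}(mpolyE Q); exact: hc.
elim => [|m s IH] hs.
  by exists (fun _ _ => 0) => x y z; rewrite big_nil meval0 /Cub; ring.
case: IH => [m' hm'|c hc]; first by apply: hs; rewrite inE hm' orbT.
have hm := hs m (mem_head _ _).
have [c' hc'] : exists c', forall x y z, ('X_[m]).@[v3 x y z] = Cub c' x y z.
  move: hm; rewrite mdegE !big_ord_recl big_ord0 addn0 addnA => /monom_cub [c' hc'].
  exists c' => x y z; rewrite mevalX !big_ord_recl big_ord0 mulr1 mulrA -hc'.
  done.
exists (fun a b => Q@_m * c' a b + c a b) => x y z.
rewrite big_cons mevalD mevalZ hc hc' /Cub; ring.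
Qed.

Lemma quad_rep (Q : {mpoly algC[3]}) : Q \is 2.-homog ->
  exists c, forall x y z, Q.@[v3 x y z] = Quad c x y z.
Proof.
move=> hQ.
suff: forall s : seq 'X_{1..3}, (forall m, m \in s -> mdeg m = 2%N) ->
  exists c, forall x y z, (\sum_(m <- s) Q@_m *: 'X_[m]).@[v3 x y z] = Quad c x y z.
  move=> /(_ (msupp Q)) H; case: H => [m hm|c hc]; first exact: (dhomog_mf hQ hm).
  by exists c => x y z; rewrite {1}(mpolyE Q); exact: hc.
elim => [|m s IH] hs.
  by exists (fun _ _ => 0) => x y z; rewrite big_nil meval0 /Quad; ring.
case: IH => [m' hm'|c hc]; first by apply: hs; rewrite inE hm' orbT.
have hm := hs m (mem_head _ _).
have [c' hc'] : exists c', forall x y z, ('X_[m]).@[v3 x y z] = Quad c' x y z.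
  move: hm; rewrite mdegE !big_ord_recl big_ord0 addn0 addnA => /monom_quad [c' hc'].
  exists c' => x y z; rewrite mevalX !big_ord_recl big_ord0 mulr1 mulrA -hc'.
  done.
exists (fun a b => Q@_m * c' a b + c a b) => x y z.
rewrite big_cons mevalD mevalZ hc hc' /Quad; ring.
Qed.


Section DD.
Variables (p0 w : 'I_4 -> algC).
Definition Phi (q : {mpoly algC[4]}) : {poly algC} :=
  (map_mpoly (polyC : algC -> {poly algC}) q).@[fun i => (p0 i)%:P + w i *: 'X].
Definition Dd (q : {mpoly algC[4]}) : algC :=
  \sum_(i < 4) w i * (mderiv i q).@[p0].
Arguments Phi : simpl never.
Arguments Dd : simpl never.
Definition good q := (forall t, (Phi q).[t] = q.@[fun i => p0 i + t * w i])
   /\ (Phi q)`_1 = Dd q.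

Lemma PhiD q1 q2 : Phi (q1 + q2) = Phi q1 + Phi q2.
Proof. by rewrite /Phi raddfD mevalD. Qed.
Lemma PhiZ c q : Phi (c *: q) = c%:P * Phi q.
Proof. by rewrite /Phi map_mpolyZ mevalZ. Qed.
Lemma PhiM q1 q2 : Phi (q1 * q2) = Phi q1 * Phi q2.
Proof. by rewrite /Phi rmorphM mevalM. Qed.
Lemma Phi1 : Phi 1 = 1.
Proof. by rewrite /Phi rmorph1 meval1. Qed.
Lemma PhiX i : Phi 'X_i = (p0 i)%:P + w i *: 'X.
Proof. by rewrite /Phi map_mpolyX mevalXU. Qed.

Lemma good_add q1 q2 : good q1 -> good q2 -> good (q1 + q2).
Proof.
move=> [h1 e1] [h2 e2]; split.
  by move=> t; rewrite PhiD hornerD h1 h2 mevalD.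
rewrite PhiD coefD e1 e2 /Dd -big_split /=; apply: eq_bigr => i _.
by rewrite mderivD mevalD mulrDr.
Qed.

Lemma good_scale c q : good q -> good (c *: q).
Proof.
move=> [h1 e1]; split.
  by move=> t; rewrite PhiZ hornerCM h1 mevalZ.
rewrite PhiZ coefCM e1 /Dd mulr_sumr; apply: eq_bigr => i _.
by rewrite mderivZ mevalZ; ring.
Qed.

Lemma good_mul q1 q2 : good q1 -> good q2 -> good (q1 * q2).
Proof.
move=> [h1 e1] [h2 e2]; split.
  by move=> t; rewrite PhiM hornerM h1 h2 mevalM.
have z1 : (Phi q1)`_0 = q1.@[p0].
  by rewrite -horner_coef0 h1; apply: meval_eq => i; rewrite mul0r addr0.
have z2 : (Phi q2)`_0 = q2.@[p0].
  by rewrite -horner_coef0 h2; apply: meval_eq => i; rewrite mul0r addr0.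
rewrite PhiM coefM !big_ord_recr big_ord0 /= subn0 subnn add0r.
move: (Phi q1) (Phi q2) z1 z2 e1 e2 => P1 P2 -> -> -> -> {h1 h2}.
rewrite /Dd mulr_sumr mulr_suml -big_split; apply: eq_bigr => i _.
rewrite /= mderivM mevalD !mevalM; ring.
Qed.

Lemma good1 : good 1.
Proof.
split; first by move=> t; rewrite Phi1 hornerC meval1.
rewrite Phi1 coefC /Dd big1 // => i _.
by rewrite -(mpolyC1) mderivC meval0 mulr0.
Qed.

Lemma goodX i : good 'X_i.
Proof.
split.
  by move=> t; rewrite PhiX hornerD hornerZ hornerX hornerC mevalXU mulrC.
rewrite PhiX coefD coefC coefZ coefX /= add0r mulr1 /Dd.
rewrite (bigD1 i) //= big1 ?addr0.
  rewrite mderivX mnm1E eqxx.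
  have -> : (U_(i) - U_(i) = 0)%MM by apply/mnmP => k; rewrite mnmBE subnn mnmE.
  by rewrite mpolyX0 scale1r meval1 mulr1.
move=> j hj; rewrite mderivX mnm1E eq_sym (negbTE hj) scale0r meval0 mulr0 //.
Qed.

Lemma good_all q : good q.
Proof.
elim/mpolyind: q => [|c m q _ _ hq].
  split; first by move=> t; rewrite /Phi raddf0 meval0 horner0 meval0.
  by rewrite /Phi raddf0 meval0 coef0 /Dd big1 // => i _; rewrite mderiv0 meval0 mulr0.
apply: good_add => //; apply: good_scale.
rewrite mpolyXE_id; apply: big_ind => //; first exact: good1.
  exact: good_mul.
move=> i _; elim: (m i) => [|k IH]; first by rewrite expr0; exact: good1.
by rewrite exprS; apply: good_mul => //; exact: goodX.
Qed.
End DD.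

Lemma poly_ext_algC (P Q : {poly algC}) : (forall t, P.[t] = Q.[t]) -> P = Q.
Proof.
move=> h; apply/eqP; rewrite -subr_eq0; apply/eqP.
apply: (@roots_geq_poly_eq0 _ _ [seq i%:R | i <- iota 0 (size (P - Q))]).
- by apply/allP => x /mapP [i _ ->]; rewrite /root hornerD hornerN h subrr.
- rewrite map_inj_uniq ?iota_uniq // => i j /eqP; rewrite eqr_nat => /eqP //.
- by rewrite size_map size_iota.
Qed.

Lemma dd_poly p0 w p (P0 : {poly algC}) :
  (forall t, p.@[fun i => p0 i + t * w i] = P0.[t]) -> Dd p0 w p = P0`_1.
Proof.
have [h e] := good_all p0 w p => hP; rewrite -e.
suff -> : Phi p0 w p = P0 by [].
by apply: poly_ext_algC => t; rewrite h hP.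
Qed.

Lemma dd0 p0 w p (c : algC) :
  (forall t, p.@[fun i => p0 i + t * w i] = c * t ^+ 2) -> Dd p0 w p = 0.
Proof.
move=> h; rewrite (@dd_poly p0 w p (c *: 'X^2)).
  by rewrite coefZ coefXn mulr0.
by move=> t; rewrite h hornerZ hornerXn.
Qed.


Section Lin.
Variables (K : fieldType) (vT : vectType K).
Implicit Types (u a v : vT) (W : {vspace vT}).

Lemma indep2 u a x y : u != 0 -> a \notin <[u]>%VS -> x *: u + y *: a = 0 -> x = 0 /\ y = 0.
Proof.
move=> hu ha e.
have hy : y = 0.
  apply/eqP; apply: contraNT ha => hy; apply/vlineP; exists (- x / y).
  apply: (scalerI hy); rewrite scalerA mulrCA divff // mulr1 scaleNr.
  by apply/eqP; rewrite -addr_eq0 addrC e.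
move: e; rewrite hy scale0r addr0 => /eqP; rewrite scaler_eq0 (negbTE hu) orbF.
by move/eqP.
Qed.

Lemma line0 u : (0 : vT) \in <[u]>%VS.
Proof. exact: mem0v. Qed.

Lemma dim_line u : u != 0 -> \dim <[u]> = 1%N.
Proof. by move=> hu; rewrite dim_vline hu. Qed.

Lemma cap_lines0 u a : u != 0 -> a \notin <[u]>%VS -> (<[u]> :&: <[a]>)%VS = 0%VS.
Proof.
move=> hu ha; apply/eqP; rewrite -subv0; apply/subvP => v.
rewrite memv_cap memv0 => /andP [/vlineP [k ->] /vlineP [k' e]].
have e' : k *: u + (- k') *: a = 0 by rewrite e scaleNr subrr.
by have [-> _] := indep2 hu ha e'; rewrite scale0r.
Qed.

Lemma dim2 u a : u != 0 -> a \notin <[u]>%VS -> \dim (<[u]> + <[a]>) = 2%N.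
Proof.
move=> hu ha; have := dimv_sum_cap <[u]> <[a]>.
have ha0 : a != 0 by apply: contraNneq ha => ->; exact: mem0v.
by rewrite cap_lines0 // dimv0 addn0 !dim_line.
Qed.

Lemma ext_basis W u : \dim W = 2%N -> u \in W -> u != 0 ->
  exists a, a \notin <[u]>%VS /\ W = (<[u]> + <[a]>)%VS.
Proof.
move=> hW huW hu.
have hcap : (W :&: <[u]>)%VS = <[u]>%VS by apply/capv_idPr; rewrite -memvE.
have hd : \dim (W :\: <[u]>) = 1%N.
  by have := dimv_cap_compl W <[u]>; rewrite hcap dim_line // hW => -[].
set a := vpick (W :\: <[u]>).
have haD : a \in (W :\: <[u]>)%VS by exact: memv_pick.
have ha0 : a != 0.
  by rewrite vpick0 -dimv_eq0 hd.
have ha : a \notin <[u]>%VS.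
  apply: contra ha0 => hau.
  by rewrite -memv0 -(capv_diff W <[u]>) memv_cap haD hau.
exists a; split => //.
have haW : a \in W by move: haD; apply/subvP; exact: diffvSl.
apply/eqP; rewrite eq_sym eqEdim subv_add -!memvE huW haW /= hW dim2 //.
Qed.

Lemma cap_le1 V W : \dim V = 2%N -> \dim W = 2%N -> V != W -> (\dim (V :&: W) <= 1)%N.
Proof.
move=> hV hW hne; rewrite leqNgt; apply/negP => h.
have h2 : \dim (V :&: W) = 2%N.
  by apply/eqP; rewrite eqn_leq h -{1}hV dimvS // capvSl.
have e1 : (V :&: W)%VS = V by apply/eqP; rewrite eqEdim capvSl h2 hV /=.
have e2 : (V :&: W)%VS = W by apply/eqP; rewrite eqEdim capvSr h2 hW /=.
by move/eqP: hne; apply; rewrite -e1 e2.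
Qed.

End Lin.


Notation V := 'rV[rat]_4.
Definition vec (v : V) : 'I_4 -> algC := fun i => ratr (v 0 i).

Lemma FC_homog F : cubic_form F -> FC F \is 3.-homog.
Proof.
move=> hF; apply/dhomogP => m.
rewrite (perm_mem (msupp_map_mpoly _ (fmorph_inj (@ratr algC)))) => hm.
exact: (dhomog_mf hF hm).
Qed.

Lemma FC_rat F (v : 'I_4 -> rat) : (FC F).@[fun i => ratr (v i)] = ratr (F.@[v]).
Proof.
rewrite !mevalE (perm_big _ (msupp_map_mpoly _ (fmorph_inj (@ratr algC)))).
rewrite rmorph_sum; apply: eq_bigr => m _.
rewrite mcoeff_map_mpoly rmorphM rmorph_prod; congr (_ * _).
by apply: eq_bigr => i _; rewrite rmorphXn.
Qed.

Lemma lis_pt F W u a (B : 'I_4 -> algC) x y : line_in_surface F W ->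
  u \in W -> a \in W -> (FC F).@[pt (vec u) (vec a) B x y 0] = 0.
Proof.
move=> h hu ha; have := h [:: (x, u); (y, a)]; rewrite /= hu ha => /(_ isT) h0.
apply: etrans h0; apply: meval_eq => i; rewrite !big_cons big_nil /pt /vec /=; ring.
Qed.

Lemma lis_vec F W v : line_in_surface F W -> v \in W -> F.@[fun i => v 0 i] = 0.
Proof.
move=> h hv; have := h [:: (1, v)]; rewrite /= hv => /(_ isT).
have -> : (FC F).@[fun i => \sum_(p <- [:: (1, v)]) p.1 * ratr (p.2 0 i)] =
          (FC F).@[fun i => ratr (v 0 i)].
  by apply: meval_eq => i; rewrite big_cons big_nil /=; ring.
by rewrite FC_rat => /eqP; rewrite fmorph_eq0 => /eqP.
Qed.

Lemma span2_sum (c1 c2 : V) (s : seq (algC * V)) :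
  all (fun p => p.2 \in (<[c1]> + <[c2]>)%VS) s ->
  exists X Y : algC, forall i,
    \sum_(p <- s) p.1 * ratr (p.2 0 i) = X * ratr (c1 0 i) + Y * ratr (c2 0 i).
Proof.
elim: s => [|[k v] s IH] /=.
  by move=> _; exists 0, 0 => i; rewrite big_nil; ring.
move=> /andP [/memv_addP [w1 /vlineP [r1 ->] [w2 /vlineP [r2 ->] ->]] /IH [X [Y hXY]]].
exists (k * ratr r1 + X), (k * ratr r2 + Y) => i.
rewrite big_cons hXY /= !mxE rmorphD !rmorphM /=; ring.
Qed.

Lemma cap_line0 (K : fieldType) (vT : vectType K) (W : {vspace vT}) (b : vT) :
  b \notin W -> (W :&: <[b]>)%VS = 0%VS.
Proof.
move=> hb; apply/eqP; rewrite -subv0; apply/subvP => v.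
rewrite memv_cap memv0 => /andP [hv /vlineP [k e]].
apply/eqP; rewrite e; have [->|hk] := eqVneq k 0; first by rewrite scale0r.
by exfalso; move/negP: hb; apply; rewrite -(scalerK hk b) -e memvZ.
Qed.

Lemma indepC (u a : V) : u != 0 -> a \notin <[u]>%VS -> forall x y : algC,
  (forall i, x * vec u i + y * vec a i = 0) -> x = 0 /\ y = 0.
Proof.
move=> hu ha x y h.
have [i1 hi1] : exists i1, u 0 i1 != 0.
  apply/existsP; apply: contraNT hu; rewrite negb_exists => /forallP H.
  by apply/eqP/rowP => j; rewrite mxE; apply/eqP; move: (H j); rewrite negbK.
have hr : ratr (u 0 i1) != 0 :> algC by rewrite fmorph_eq0.
suff hy : y = 0.
  split => //; move: (h i1); rewrite hy mul0r addr0 /vec => /eqP.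
  by rewrite mulf_eq0 (negbTE hr) orbF => /eqP.
apply/eqP; apply: contraNT ha => hy; apply/vlineP; exists (a 0 i1 / u 0 i1).
have ea j : vec a j = - x / y * vec u j.
  have e1 : y * vec a j = - (x * vec u j) by apply/eqP; rewrite -addr_eq0 addrC h.
  by apply: (mulfI hy); rewrite e1; field.
apply/rowP => j; rewrite mxE; apply: (fmorph_inj (@ratr algC)).
rewrite !rmorphM fmorphV /= -/(vec a j) -/(vec u j) -/(vec a i1) -/(vec u i1) !ea.
by field; rewrite hr.
Qed.

Lemma mderiv_homog d (p : {mpoly algC[4]}) i : p \is d.+1.-homog -> mderiv i p \is d.-homog.
Proof.
move=> hp; apply/dhomogP => m; rewrite mcoeff_msupp mcoeff_mderiv => hm.
have hm' : (m + U_(i))%MM \in msupp p.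
  by rewrite mcoeff_msupp; apply: contraNneq hm => ->; rewrite mul0rn.
have e : mdeg (m + U_(i))%MM = d.+1 := dhomog_mf hp hm'.
move: e; rewrite mdegD mdeg1 addn1 => -[] e.
exact: e.
Qed.

Lemma Dd_lin p0 w1 w2 q (a1 a2 : algC) :
  Dd p0 (fun i => a1 * w1 i + a2 * w2 i) q = a1 * Dd p0 w1 q + a2 * Dd p0 w2 q.
Proof.
rewrite /Dd !mulr_sumr -big_split; apply: eq_bigr => i _ /=; ring.
Qed.

Lemma Dd_delta p0 q i0 : Dd p0 (fun i => (i == i0)%:R) q = (mderiv i0 q).@[p0].
Proof.
rewrite /Dd (bigD1 i0) //= eqxx mul1r big1 ?addr0 // => j hj.
by rewrite (negbTE hj) mul0r.
Qed.

Lemma quad_root (a b c : algC) : c != 0 -> exists y, a + b * y + c * y ^+ 2 = 0.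
Proof.
move=> hc; set s := sqrtC (b ^+ 2 - 4%:R * a * c).
have hs : s ^+ 2 = b ^+ 2 - 4%:R * a * c by rewrite sqrtCK.
exists ((- b + s) / (2%:R * c)).
have h2 : (2%:R : algC) != 0 by rewrite pnatr_eq0.
have h4 : (4%:R * c : algC) != 0 by rewrite mulf_neq0 // pnatr_eq0.
apply: (mulfI h4); rewrite mulr0.
have -> : 4%:R * c * (a + b * ((- b + s) / (2%:R * c)) + c * ((- b + s) / (2%:R * c)) ^+ 2)
  = s ^+ 2 - (b ^+ 2 - 4%:R * a * c).
  by field.
by rewrite hs subrr.
Qed.

Lemma Dd_lin4 p0 w1 w2 w3 w4 q (a1 a2 a3 a4 : algC) :
  Dd p0 (fun i => a1 * w1 i + a2 * w2 i + a3 * w3 i + a4 * w4 i) q =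
  a1 * Dd p0 w1 q + a2 * Dd p0 w2 q + a3 * Dd p0 w3 q + a4 * Dd p0 w4 q.
Proof.
rewrite /Dd !mulr_sumr -!big_split; apply: eq_bigr => i _ /=; ring.
Qed.

Lemma sing F (u a b : V) (k : algC) : smooth_surface F -> cubic_form F ->
  u != 0 -> a \notin <[u]>%VS -> b \notin (<[u]> + <[a]>)%VS ->
  (forall x y z, (FC F).@[pt (vec u) (vec a) (vec b) x y z] = k * y * z ^+ 2) -> False.
Proof.
move=> hs hF hu ha hb hg.
set P := (<[u]> + <[a]> + <[b]>)%VS.
have hb0 : b != 0 by apply: contraNneq hb => ->; exact: mem0v.
have dP : \dim P = 3%N.
  have := dimv_sum_cap (<[u]> + <[a]>)%VS <[b]>.
  by rewrite cap_line0 // dimv0 addn0 dim2 // dim_line.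
set e := vpick P^C.
have he0 : e != 0 by rewrite vpick0 -dimv_eq0 dimv_compl dP dimvf.
have he : e \notin P.
  apply: contra he0 => heP; rewrite -memv0 -(capv_compl P) memv_cap heP.
  exact: memv_pick.
have full : forall w : V, exists x y z r : rat, w = x *: u + y *: a + z *: b + r *: e.
  move=> w.
  have : w \in (P + <[e]>)%VS.
    have -> : (P + <[e]>)%VS = fullv.
      apply/eqP; rewrite eqEdim subvf /= dimvf.
      have := dimv_sum_cap P <[e]>.
      by rewrite cap_line0 // dimv0 addn0 dP dim_line // => ->.
    exact: memvf.
  move=> /memv_addP [w1 /memv_addP [w2 /memv_addP [w3 /vlineP [x ->]
     [w4 /vlineP [y ->] ->]] [w5 /vlineP [z ->] ->]] [w6 /vlineP [r ->] ->]].
  by exists x, y, z, r.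
pose G := \sum_(j < 4) ratr (e 0 j) *: mderiv j (FC F).
have hG : G \is 2.-homog.
  apply: (big_ind (fun q : {mpoly algC[4]} => q \is 2.-homog)); first exact: dhomog0.
    by move=> ? ? h1 h2; exact: (dhomogD h1 h2).
  by move=> j _; apply: dhomogZ; apply: mderiv_homog; exact: FC_homog.
have hGD q : G.@[q] = Dd q (vec e) (FC F).
  by rewrite /G raddf_sum /Dd; apply: eq_bigr => j _; exact: mevalZ.
have [Q [hQ hQe]] := expand (vec u) (vec a) (fun _ => 0) hG.
have [c' hc'] := quad_rep hQ.
have hq x y : Dd (pt (vec u) (vec a) (vec b) x y 0) (vec e) (FC F) =
    c' 2%N 0%N * x ^+ 2 + c' 1%N 1%N * x * y + c' 0%N 2%N * y ^+ 2.
  rewrite -hGD.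
  have -> : G.@[pt (vec u) (vec a) (vec b) x y 0] = G.@[pt (vec u) (vec a) (fun _ => 0) x y 0].
    by apply: meval_eq => i; rewrite /pt !mul0r.
  by rewrite hQe hc' /Quad; ring.
have [x0 [y0 [hxy hq0]]] : exists x0 y0 : algC, ~ (x0 = 0 /\ y0 = 0) /\
    c' 2%N 0%N * x0 ^+ 2 + c' 1%N 1%N * x0 * y0 + c' 0%N 2%N * y0 ^+ 2 = 0.
  have [h|h] := eqVneq (c' 0%N 2%N) 0.
    exists 0, 1; split; first by case=> _ /eqP; rewrite oner_eq0.
    by rewrite h; ring.
  have [y hy] := quad_root (c' 2%N 0%N) (c' 1%N 1%N) h.
  exists 1, y; split; first by case=> /eqP; rewrite oner_eq0.
  by rewrite -hy; ring.
set p := pt (vec u) (vec a) (vec b) x0 y0 0.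
apply: (hs p).
  have [i hi|hn] := pickP (fun i => p i != 0); first by exists i.
  exfalso; apply: hxy; apply: (indepC hu ha) => i.
  by move: (hn i) => /= /negbFE /eqP; rewrite /p /pt mul0r addr0.
split; first by rewrite hg expr0n /= mulr0.
move=> i0; rewrite -Dd_delta.
have [x [y [z [r hw]]]] := full (delta_mx 0 i0).
have -> : Dd p (fun i => (i == i0)%:R) (FC F) =
   Dd p (fun i => ratr x * vec u i + ratr y * vec a i + ratr z * vec b i + ratr r * vec e i) (FC F).
  rewrite /Dd; apply: eq_bigr => i _; congr (_ * _).
  have := congr1 (fun M : V => ratr (M 0 i) : algC) hw; rewrite /= !mxE /vec.
  by rewrite eqxx /= !rmorphD !rmorphM /= => <-; rewrite rmorph_nat.
rewrite Dd_lin4 hq hq0 mulr0 addr0.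
rewrite (@dd0 p (vec u) (FC F) 0) ?(@dd0 p (vec a) (FC F) 0) ?(@dd0 p (vec b) (FC F) (k * y0)).
- by rewrite !mulr0 !addr0.
- move=> t; rewrite -(hg x0 y0 t); apply: meval_eq => i; rewrite /p /pt; ring.
- move=> t; rewrite mul0r; have := hg x0 (y0 + t) 0; rewrite expr0n /= mulr0 => <-.
  apply: meval_eq => i; rewrite /p /pt; ring.
- move=> t; rewrite mul0r; have := hg (x0 + t) y0 0; rewrite expr0n /= mulr0 => <-.
  apply: meval_eq => i; rewrite /p /pt; ring.
Qed.

Lemma cub4 (a3 a2 a1 a0 : algC) : (forall x, a3 * x ^+ 3 + a2 * x ^+ 2 + a1 * x + a0 = 0) ->
  [/\ a3 = 0, a2 = 0, a1 = 0 & a0 = 0].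
Proof.
move=> h.
have h0 := h 0; have h1 := h 1; have hm := h (-1); have h2 := h 2%:R.
have e0 : a0 = 0 by rewrite -h0; ring.
have e2 : 2%:R * a2 = 0.
  have -> : 2%:R * a2 = (a3 * 1 ^+ 3 + a2 * 1 ^+ 2 + a1 * 1 + a0)
     + (a3 * (-1) ^+ 3 + a2 * (-1) ^+ 2 + a1 * (-1) + a0) - 2%:R * a0 by ring.
  by rewrite h1 hm e0; ring.
have e2' : a2 = 0 by move/eqP: e2; rewrite mulf_eq0 pnatr_eq0 /= => /eqP.
have e3 : 6%:R * a3 = 0.
  have -> : 6%:R * a3 = (a3 * 2%:R ^+ 3 + a2 * 2%:R ^+ 2 + a1 * 2%:R + a0)
     - 2%:R * (a3 * 1 ^+ 3 + a2 * 1 ^+ 2 + a1 * 1 + a0) - 2%:R * a2 + a0 by ring.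
  by rewrite h1 h2 e2' e0; ring.
have e3' : a3 = 0 by move/eqP: e3; rewrite mulf_eq0 pnatr_eq0 /= => /eqP.
split => //.
have := h1; rewrite e3' e2' e0 => <-; ring.
Qed.

Definition comb (u a b : V) (x y z : rat) : V := x *: u + y *: a + z *: b.

Section Plane.
Variables (u a b : V).
Hypotheses (hu : u != 0) (ha : a \notin <[u]>%VS) (hb : b \notin (<[u]> + <[a]>)%VS).

Lemma vec_comb x y z i :
  vec (comb u a b x y z) i = pt (vec u) (vec a) (vec b) (ratr x) (ratr y) (ratr z) i.
Proof. by rewrite /vec /comb /pt !mxE !rmorphD !rmorphM. Qed.

Lemma indep3 x y z : comb u a b x y z = 0 -> [/\ x = 0, y = 0 & z = 0].
Proof.
move=> e.
have hz : z = 0.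
  apply/eqP; apply: contraNT hb => hz.
  have -> : b = (- x / z) *: u + (- y / z) *: a.
    apply: (scalerI hz); rewrite scalerDr !scalerA.
    have -> : z * (- x / z) = - x by field.
    have -> : z * (- y / z) = - y by field.
    rewrite !scaleNr -opprD; apply/eqP; rewrite -addr_eq0 addrC.
    by move: e; rewrite /comb => ->.
  by rewrite memv_add // memvZ // memv_line.
move: e; rewrite /comb hz scale0r addr0 => e.
by have [-> ->] := indep2 hu ha e.
Qed.

Lemma memA x y z : comb u a b x y z \in (<[u]> + <[a]>)%VS -> z = 0.
Proof.
move/memv_addP => [w1 /vlineP [k ->] [w2 /vlineP [k' ->] e]].
have : comb u a b (x - k) (y - k') z = 0.
  apply/rowP => i; move/rowP: e => /(_ i); rewrite !mxE => e.
  transitivity ((x * u 0 i + y * a 0 i + z * b 0 i) - (k * u 0 i + k' * a 0 i)); first ring.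
  by rewrite e; ring.
by case/indep3.
Qed.

Lemma memB x y z : comb u a b x y z \in (<[u]> + <[b]>)%VS -> y = 0.
Proof.
move/memv_addP => [w1 /vlineP [k ->] [w2 /vlineP [k' ->] e]].
have : comb u a b (x - k) y (z - k') = 0.
  apply/rowP => i; move/rowP: e => /(_ i); rewrite !mxE => e.
  transitivity ((x * u 0 i + y * a 0 i + z * b 0 i) - (k * u 0 i + k' * b 0 i)); first ring.
  by rewrite e; ring.
by case/indep3.
Qed.

Lemma memP x y z : comb u a b x y z \in (<[u]> + <[a]> + <[b]>)%VS.
Proof. by rewrite !memv_add // memvZ // memv_line. Qed.


Lemma tri_mk F (al be ga x1 y1 z1 x2 y2 z2 : rat) :
  (forall x y z : algC, (FC F).@[pt (vec u) (vec a) (vec b) x y z] =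
     y * z * (ratr al * x + ratr be * y + ratr ga * z)) ->
  al * x1 + be * y1 + ga * z1 = 0 -> al * x2 + be * y2 + ga * z2 = 0 ->
  (forall x y z, al * x + be * y + ga * z = 0 -> exists s t,
     [/\ x = s * x1 + t * x2, y = s * y1 + t * y2 & z = s * z1 + t * z2]) ->
  (forall s t, s * x1 + t * x2 = 0 -> s * y1 + t * y2 = 0 -> s * z1 + t * z2 = 0 ->
     s = 0 /\ t = 0) ->
  (z1 != 0) || (z2 != 0) -> (y1 != 0) || (y2 != 0) ->
  exists C : {vspace V}, [/\ Qline_on F C, C != (<[u]> + <[a]>)%VS,
     C != (<[u]> + <[b]>)%VS, (C <= <[u]> + <[a]> + <[b]>)%VS &
     forall x y z : rat, F.@[fun i => comb u a b x y z 0 i] = 0 ->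
       [|| z == 0, y == 0 | comb u a b x y z \in C]].
Proof.
move=> hg h1 h2 hspan hind hz hy.
set c1 := comb u a b x1 y1 z1; set c2 := comb u a b x2 y2 z2.
have lin s t : s *: c1 + t *: c2 = comb u a b (s * x1 + t * x2) (s * y1 + t * y2) (s * z1 + t * z2).
  by apply/rowP => i; rewrite !mxE; ring.
have hc1 : c1 != 0.
  apply/negP => /eqP e.
  have [e1 e2 e3] := indep3 e.
  have [] := hind 1 0; rewrite ?e1 ?e2 ?e3; try ring.
  by move/eqP; rewrite oner_eq0.
have hc2 : c2 \notin <[c1]>%VS.
  apply/negP => /vlineP [k e].
  have e' : comb u a b (- k * x1 + 1 * x2) (- k * y1 + 1 * y2) (- k * z1 + 1 * z2) = 0.
    by rewrite -lin e scaleNr scale1r addNr.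
  have [e1 e2 e3] := indep3 e'.
  have [_] := hind (- k) 1 e1 e2 e3.
  by move/eqP; rewrite oner_eq0.
have inC s t : comb u a b (s * x1 + t * x2) (s * y1 + t * y2) (s * z1 + t * z2) \in (<[c1]> + <[c2]>)%VS.
  by rewrite -lin memv_add // memvZ // memv_line.
exists (<[c1]> + <[c2]>)%VS; split.
- split; first by rewrite /Qline dim2.
  move=> s hs; have [X [Y hXY]] := span2_sum hs.
  transitivity ((FC F).@[pt (vec u) (vec a) (vec b) (X * ratr x1 + Y * ratr x2)
     (X * ratr y1 + Y * ratr y2) (X * ratr z1 + Y * ratr z2)]).
    apply: meval_eq => i; rewrite hXY -/(vec c1 i) -/(vec c2 i) !vec_comb /pt; ring.
  rewrite hg.
  have -> : ratr al * (X * ratr x1 + Y * ratr x2) + ratr be * (X * ratr y1 + Y * ratr y2)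
     + ratr ga * (X * ratr z1 + Y * ratr z2) =
     X * ratr (al * x1 + be * y1 + ga * z1) + Y * ratr (al * x2 + be * y2 + ga * z2) :> algC.
    by rewrite !rmorphD !rmorphM /=; ring.
  by rewrite h1 h2 rmorph0; ring.
- apply/negP => /eqP e.
  have m1 : c1 \in (<[u]> + <[a]>)%VS by rewrite -e; apply: (subvP (addvSl _ _)); exact: memv_line.
  have m2 : c2 \in (<[u]> + <[a]>)%VS by rewrite -e; apply: (subvP (addvSr _ _)); exact: memv_line.
  by move: hz; rewrite (memA m1) (memA m2) eqxx.
- apply/negP => /eqP e.
  have m1 : c1 \in (<[u]> + <[b]>)%VS by rewrite -e; apply: (subvP (addvSl _ _)); exact: memv_line.
  have m2 : c2 \in (<[u]> + <[b]>)%VS by rewrite -e; apply: (subvP (addvSr _ _)); exact: memv_line.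
  by move: hy; rewrite (memB m1) (memB m2) eqxx.
- by rewrite subv_add -!memvE !memP.
move=> x y z hF0.
have : (FC F).@[vec (comb u a b x y z)] = 0.
  by rewrite /vec FC_rat hF0 rmorph0.
have -> : (FC F).@[vec (comb u a b x y z)] =
   (FC F).@[pt (vec u) (vec a) (vec b) (ratr x) (ratr y) (ratr z)].
  by apply: meval_eq => i; exact: vec_comb.
rewrite hg.
have -> : ratr al * ratr x + ratr be * ratr y + ratr ga * ratr z =
          ratr (al * x + be * y + ga * z) :> algC by rewrite !rmorphD !rmorphM.
move/eqP; rewrite -!rmorphM fmorph_eq0 !mulf_eq0 => /orP [/orP [->|->]|/eqP hl]; rewrite ?orbT //.
have [s [t [-> -> ->]]] := hspan x y z hl.
by rewrite inC !orbT.
Qed.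

End Plane.

Lemma tri_core F (u a b : V) : smooth_surface F -> cubic_form F ->
  u != 0 -> a \notin <[u]>%VS -> b \notin (<[u]> + <[a]>)%VS ->
  line_in_surface F (<[u]> + <[a]>)%VS -> line_in_surface F (<[u]> + <[b]>)%VS ->
  exists C : {vspace V}, [/\ Qline_on F C, C != (<[u]> + <[a]>)%VS,
     C != (<[u]> + <[b]>)%VS, (C <= <[u]> + <[a]> + <[b]>)%VS &
     forall x y z : rat, F.@[fun i => comb u a b x y z 0 i] = 0 ->
       [|| z == 0, y == 0 | comb u a b x y z \in C]].
Proof.
move=> hs hF hu ha hb hLA hLB.
have [Q [hQ hQe]] := expand (vec u) (vec a) (vec b) (FC_homog hF).
have [c hc] := cub_rep hQ.
have hgc x y z : (FC F).@[pt (vec u) (vec a) (vec b) x y z] = Cub c x y z by rewrite hQe hc.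
have uA : u \in (<[u]> + <[a]>)%VS by apply: (subvP (addvSl _ _)); exact: memv_line.
have aA : a \in (<[u]> + <[a]>)%VS by apply: (subvP (addvSr _ _)); exact: memv_line.
have uB : u \in (<[u]> + <[b]>)%VS by apply: (subvP (addvSl _ _)); exact: memv_line.
have bB : b \in (<[u]> + <[b]>)%VS by apply: (subvP (addvSr _ _)); exact: memv_line.
have hA x y : Cub c x y 0 = 0 by rewrite -hgc; apply: etrans (lis_pt (vec b) x y hLA uA aA).
have hB x z : Cub c x 0 z = 0.
  rewrite -hgc; apply: etrans (lis_pt (vec a) x z hLB uB bB).
  by apply: meval_eq => i; rewrite /pt; ring.
have [e30 e21 e12 e03] := @cub4 (c 3%N 0%N) (c 2%N 1%N) (c 1%N 2%N) (c 0%N 3%N)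
  ltac:(by move=> x; rewrite -(hA x 1) /Cub; ring).
have [_ e20 e10 e00] := @cub4 (c 3%N 0%N) (c 2%N 0%N) (c 1%N 0%N) (c 0%N 0%N)
  ltac:(by move=> x; rewrite -(hB x 1) /Cub; ring).
have gform x y z : Cub c x y z = y * z * (c 1%N 1%N * x + c 0%N 2%N * y + c 0%N 1%N * z).
  by rewrite /Cub e30 e21 e12 e03 e20 e10 e00; ring.
pose val x y z := F.@[fun i => comb u a b x y z 0 i].
have hval x y z : ratr (val x y z) =
    ratr y * ratr z * (c 1%N 1%N * ratr x + c 0%N 2%N * ratr y + c 0%N 1%N * ratr z).
  rewrite /val -FC_rat -gform -hgc; apply: meval_eq => i; exact: vec_comb.
pose al := val 1 1 1 - val 0 1 1.
pose ga := (val 0 1 2%:R - 2%:R * val 0 1 1) / 2%:R.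
pose be := val 0 1 1 - ga.
have h2 : (2%:R : algC) != 0 by rewrite pnatr_eq0.
have hga : ratr ga = c 0%N 1%N.
  rewrite /ga !rmorphM rmorphB rmorphM fmorphV /= !hval !rmorph_nat rmorph0 rmorph1.
  by field.
have hbe : ratr be = c 0%N 2%N.
  rewrite /be rmorphB /= hga hval rmorph0 rmorph1; ring.
have hal : ratr al = c 1%N 1%N.
  rewrite /al rmorphB /= !hval rmorph0 rmorph1; ring.
have hg x y z : (FC F).@[pt (vec u) (vec a) (vec b) x y z] =
     y * z * (ratr al * x + ratr be * y + ratr ga * z).
  by rewrite hgc gform hal hbe hga.
have hb' : b \notin <[u]>%VS.
  by apply: contra hb; apply: (subvP (addvSl _ _)).
have ha' : a \notin (<[u]> + <[b]>)%VS.
  apply/negP => h.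
  have ea : comb u a b 0 1 0 = a by rewrite /comb !scale0r scale1r add0r addr0.
  by rewrite -ea in h; move/(memB hu ha hb): h => /eqP; rewrite oner_eq0.
have nab : ~ (al = 0 /\ be = 0).
  case=> e1 e2; apply: (@sing F u a b (ratr ga) hs hF hu ha hb) => x y z.
  by rewrite hg e1 e2 rmorph0; ring.
have nag : ~ (al = 0 /\ ga = 0).
  case=> e1 e2; apply: (@sing F u b a (ratr be) hs hF hu hb' ha') => x y z.
  have -> : (FC F).@[pt (vec u) (vec b) (vec a) x y z] =
            (FC F).@[pt (vec u) (vec a) (vec b) x z y].
    by apply: meval_eq => i; rewrite /pt; ring.
  by rewrite hg e1 e2 rmorph0; ring.
have [h0|h0] := eqVneq al 0.
  have hbe0 : be != 0 by apply/eqP => e; apply: nab.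
  have hga0 : ga != 0 by apply/eqP => e; apply: nag.
  apply: (@tri_mk u a b hu ha hb F al be ga 1 0 0 0 ga (- be) hg).
  - by rewrite h0; ring.
  - by ring.
  - move=> x y z hl; exists x, (y / ga).
    have hz : ga * z = - (be * y).
      by apply/eqP; rewrite -addr_eq0 addrC; move: hl; rewrite h0 mul0r add0r => ->.
    split; [by ring | by field | ].
    by apply: (mulfI hga0); rewrite hz; field.
  - move=> s t e1 e2 _; move: e1; rewrite mulr1 mulr0 addr0 => e1; split => //.
    by move/eqP: e2; rewrite mulr0 add0r mulf_eq0 (negbTE hga0) orbF => /eqP.
  - by rewrite oppr_eq0 hbe0 orbT.
  - by rewrite hga0 orbT.
apply: (@tri_mk u a b hu ha hb F al be ga be (- al) 0 ga 0 (- al) hg).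
- by ring.
- by ring.
- move=> x y z hl; exists (- y / al), (- z / al).
  have hx : al * x = - (be * y + ga * z).
    by apply/eqP; rewrite -addr_eq0 addrA; move: hl => ->.
  split; [ | by field | by field].
  by apply: (mulfI h0); rewrite hx; field.
- move=> s t _ e2 e3; split.
    by move/eqP: e2; rewrite mulr0 addr0 mulf_eq0 oppr_eq0 (negbTE h0) orbF => /eqP.
  by move/eqP: e3; rewrite mulr0 add0r mulf_eq0 oppr_eq0 (negbTE h0) orbF => /eqP.
- by rewrite oppr_eq0 h0 orbT.
- by rewrite oppr_eq0 h0.
Qed.

Lemma tri F (A B : {vspace V}) : smooth_surface F -> cubic_form F ->
  Qline_on F A -> Qline_on F B -> A != B -> (A :&: B)%VS != 0%VS ->
  exists C : {vspace V}, [/\ Qline_on F C, C != A, C != B, (C <= A + B)%VS &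
   forall v, v \in (A + B)%VS -> F.@[fun i => v 0 i] = 0 -> [|| v \in A, v \in B | v \in C]].
Proof.
move=> hs hF [dA lA] [dB lB] hne hcap.
set u := vpick (A :&: B).
have hu : u != 0 by rewrite vpick0.
have huAB : u \in (A :&: B)%VS by exact: memv_pick.
have huA : u \in A by move: huAB; rewrite memv_cap => /andP [].
have huB : u \in B by move: huAB; rewrite memv_cap => /andP [].
have [a [ha eA]] := ext_basis dA huA hu.
have [b [hb' eB]] := ext_basis dB huB hu.
have ecap : (A :&: B)%VS = <[u]>%VS.
  apply/eqP; rewrite eq_sym eqEdim -memvE huAB dim_line //=.
  exact: cap_le1.
have hb : b \notin (<[u]> + <[a]>)%VS.
  apply: contra hb' => hbA; rewrite -ecap memv_cap {1}eA hbA eB /=.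
  by apply: (subvP (addvSr _ _)); exact: memv_line.
rewrite eA in lA; rewrite eB in lB.
have [C [hC hCA hCB hCP hun]] := tri_core hs hF hu ha hb lA lB.
exists C; split => //.
- by rewrite eA.
- by rewrite eB.
- apply: (subv_trans hCP); rewrite eA eB !subv_add -!memvE -andbA; apply/and3P; split.
  + by apply: (subvP (addvSl _ _)); apply: (subvP (addvSl _ _)); exact: memv_line.
  + by apply: (subvP (addvSl _ _)); apply: (subvP (addvSr _ _)); exact: memv_line.
  + by apply: (subvP (addvSr _ _)); apply: (subvP (addvSr _ _)); exact: memv_line.
move=> v /memv_addP [w1 hw1 [w2 hw2 ->]].
move: hw1 hw2; rewrite eA eB.
move=> /memv_addP [w3 /vlineP [k1 ->] [w4 /vlineP [k2 ->] ->]].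
move=> /memv_addP [w5 /vlineP [k3 ->] [w6 /vlineP [k4 ->] ->]] hv.
have ev : k1 *: u + k2 *: a + (k3 *: u + k4 *: b) = comb u a b (k1 + k3) k2 k4.
  by apply/rowP => i; rewrite !mxE; ring.
rewrite ev in hv *.
case/or3P: (hun _ _ _ hv) => [/eqP hz|/eqP hy|->]; rewrite ?orbT //.
  by rewrite /comb hz scale0r addr0 memv_add // memvZ // memv_line.
by apply/orP; right; apply/orP; left; rewrite /comb hy scale0r addr0 memv_add // memvZ // memv_line.
Qed.

Lemma dim_sum3 (X Y : {vspace V}) : \dim X = 2%N -> \dim Y = 2%N -> X != Y ->
  (X :&: Y)%VS != 0%VS -> \dim (X + Y) = 3%N.
Proof.
move=> dX dY hne hc.
have := dimv_sum_cap X Y; rewrite dX dY.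
have h1 := cap_le1 dX dY hne.
have h0 : (\dim (X :&: Y) != 0)%N by rewrite dimv_eq0.
by lia.
Qed.

Lemma dim_le4 (X : {vspace V}) : (\dim X <= 4)%N.
Proof. by have := dimvS (subvf X); rewrite dimvf. Qed.

Lemma not_cover F (A B C D : {vspace V}) :
  Qline_on F A -> Qline_on F B -> Qline_on F C -> Qline_on F D ->
  D != A -> D != B -> D != C ->
  (forall v, v \in D -> [|| v \in A, v \in B | v \in C]) -> False.
Proof.
move=> [dA _] [dB _] [dC _] [dD _] nA nB nC hcov.
set d1 := vpick D.
have hd1 : d1 != 0 by rewrite vpick0 -dimv_eq0 dD.
have [d2 [hd2 eD]] := ext_basis dD (memv_pick D) hd1.
pose w (t : rat) := d1 + t *: d2.
have wD t : w t \in D.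
  by rewrite eD memv_add // ?memvZ // memv_line.
have same (X : {vspace V}) s t : \dim X = 2%N -> D != X -> s != t -> w s \in X -> w t \in X -> False.
  move=> dX nX hst hs ht.
  have d2X : d2 \in X.
    have -> : d2 = (s - t)^-1 *: (w s - w t).
      rewrite /w opprD addrACA subrr add0r -scalerBl scalerA mulVf ?scale1r //.
      by rewrite subr_eq0.
    by rewrite memvZ // memvB.
  have d1X : d1 \in X.
    have -> : d1 = w s - s *: d2 by rewrite /w addrK.
    by rewrite memvB // memvZ.
  have : D = X.
    apply/eqP; rewrite eqEdim dX dD leqnn andbT eD subv_add -!memvE d1X d2X //.
  by move/eqP: nX.
have h t : [|| w t \in A, w t \in B | w t \in C] := hcov _ (wD t).
have n01 : (0 : rat) != 1 by [].
have n02 : (0 : rat) != 2%:R by [].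
have n03 : (0 : rat) != 3%:R by [].
have n12 : (1 : rat) != 2%:R by [].
have n13 : (1 : rat) != 3%:R by [].
have n23 : (2%:R : rat) != 3%:R by [].
case/or3P: (h 0) => h0; case/or3P: (h 1) => h1; case/or3P: (h 2%:R) => h2;
  case/or3P: (h 3%:R) => h3;
  first [ exact: (same A _ _ dA nA n01 h0 h1) | exact: (same A _ _ dA nA n02 h0 h2)
        | exact: (same A _ _ dA nA n03 h0 h3) | exact: (same A _ _ dA nA n12 h1 h2)
        | exact: (same A _ _ dA nA n13 h1 h3) | exact: (same A _ _ dA nA n23 h2 h3)
        | exact: (same B _ _ dB nB n01 h0 h1) | exact: (same B _ _ dB nB n02 h0 h2)
        | exact: (same B _ _ dB nB n03 h0 h3) | exact: (same B _ _ dB nB n12 h1 h2)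
        | exact: (same B _ _ dB nB n13 h1 h3) | exact: (same B _ _ dB nB n23 h2 h3)
        | exact: (same C _ _ dC nC n01 h0 h1) | exact: (same C _ _ dC nC n02 h0 h2)
        | exact: (same C _ _ dC nC n03 h0 h3) | exact: (same C _ _ dC nC n12 h1 h2)
        | exact: (same C _ _ dC nC n13 h1 h3) | exact: (same C _ _ dC nC n23 h2 h3) ].
Qed.



Lemma nat_aux1 (a b : nat) : (a <= 4)%N -> (a + b = 2 + 3)%N -> (b != 0)%N.
Proof. by lia. Qed.
Lemma nat_aux2 (c d : nat) : (d <= 1)%N -> (c + d = 2 + 2)%N -> (3 <= c)%N.
Proof. by lia. Qed.

Lemma main_core F (A B C D : {vspace V}) : smooth_surface F -> cubic_form F ->
  (forall W, Qline_on F W -> W \in [:: A; B; C; D]) ->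
  Qline_on F A -> Qline_on F B -> Qline_on F C -> Qline_on F D ->
  uniq [:: A; B; C; D] -> (A :&: B)%VS != 0%VS -> (C <= A + B)%VS ->
  (forall v, v \in (A + B)%VS -> F.@[fun i => v 0 i] = 0 -> [|| v \in A, v \in B | v \in C]) ->
  False.
Proof.
move=> hs hF hall hA hB hC hD hu hcap hCP hun.
move: hu; rewrite /= !inE !negb_or => /and4P [/and3P [nAB nAC nAD] /andP [nBC nBD] nCD _].
have [dA lA] := hA; have [dB lB] := hB; have [dC lC] := hC; have [dD lD] := hD.
set P := (A + B)%VS.
have dP : \dim P = 3%N by exact: dim_sum3.
have inP E : Qline_on F E -> E != D -> (E <= P)%VS.
  move=> hE nE; move: (hall E hE); rewrite !inE (negbTE nE) orbF.
  case/or3P => /eqP ->; [exact: addvSl | exact: addvSr | exact: hCP].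
have AP : (A <= P)%VS by exact: addvSl.
have BP : (B <= P)%VS by exact: addvSr.
have hDP : (D <= P)%VS.
  have hcapD : (D :&: P)%VS != 0%VS.
    rewrite -dimv_eq0; have := dimv_sum_cap D P; rewrite dD dP.
    exact: (nat_aux1 (dim_le4 (D + P))).
  set v := vpick (D :&: P).
  have hv0 : v != 0 by rewrite vpick0.
  have hvDP : v \in (D :&: P)%VS by exact: memv_pick.
  have hvD : v \in D by move: hvDP; rewrite memv_cap => /andP [].
  have hvP : v \in P by move: hvDP; rewrite memv_cap => /andP [].
  have step X : Qline_on F X -> (X <= P)%VS -> X != D -> v \in X -> (D <= P)%VS.
    move=> hX XP nX hvX; have [dX lX] := hX.
    have cXD : (X :&: D)%VS != 0%VS.
      by apply: contraNneq hv0 => e; rewrite -memv0 -e memv_cap hvX hvD.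
    have [E [hE nEX nED EXD _]] := tri hs hF hX hD nX cXD.
    have EP := inP E hE nED.
    have [dE _] := hE.
    have eEX : (E + X)%VS = P.
      apply/eqP; rewrite eqEdim subv_add EP XP dP /=.
      have := dimv_sum_cap E X; rewrite dE dX.
      exact: (nat_aux2 (cap_le1 dE dX nEX)).
    have dXD : \dim (X + D) = 3%N by exact: dim_sum3.
    have ePXD : P = (X + D)%VS.
      apply/eqP; rewrite eqEdim -{1}eEX subv_add EXD addvSl dP dXD /=.
      by [].
    by rewrite ePXD addvSr.
  have := hun v hvP (lis_vec lD hvD).
  case/or3P => h.
  - exact: (step A hA AP nAD h).
  - exact: (step B hB BP nBD h).
  - exact: (step C hC hCP nCD h).
have hcov v : v \in D -> [|| v \in A, v \in B | v \in C].
  move=> hv; apply: hun; first exact: (subvP hDP).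
  exact: (lis_vec lD hv).
apply: (not_cover hA hB hC hD _ _ _ hcov).
- by rewrite eq_sym.
- by rewrite eq_sym.
- by rewrite eq_sym.
Qed.

Lemma finish F (A B X Y : {vspace V}) : smooth_surface F -> cubic_form F ->
  (forall W, W \in [:: A; B; X; Y] <-> Qline_on F W) -> uniq [:: A; B; X; Y] ->
  (A :&: B)%VS != 0%VS -> False.
Proof.
move=> hs hF hiff hu hcap.
have hQ W : W \in [:: A; B; X; Y] -> Qline_on F W := fun h => (hiff W).1 h.
have hA := hQ A (mem_head _ _).
have hB : Qline_on F B by apply: hQ; rewrite !inE eqxx !orbT.
have hX : Qline_on F X by apply: hQ; rewrite !inE eqxx !orbT.
have hY : Qline_on F Y by apply: hQ; rewrite !inE eqxx !orbT.
have hu' := hu; move: hu'; rewrite /= !inE !negb_or => /and4P [/and3P [nAB nAX nAY] /andP [nBX nBY] nXY _].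
have [C [hC nCA nCB hCP hun]] := tri hs hF hA hB nAB hcap.
have := (hiff C).2 hC; rewrite !inE (negbTE nCA) (negbTE nCB) /= => /orP [/eqP eC|/eqP eC].
  subst C; apply: (main_core hs hF _ hA hB hX hY hu hcap hCP hun).
  by move=> W /hiff.
subst C; apply: (main_core (D := X) hs hF _ hA hB hY hX _ hcap hCP hun).
  by move=> W /hiff; rewrite !inE; case: (W == X); case: (W == Y); rewrite ?orbT ?orbF.
by rewrite /= !inE !negb_or nAB nAX nAY nBX nBY (eq_sym Y) nXY.
Qed.


Local Close Scope ring_scope.

Theorem corollary4p12 (F : {mpoly rat[4]}) :
  cubic_form F -> smooth_surface F ->
  ~ has_three_disjoint_Qlines F ->
  ~ exactly_n_Qlines F 4.
Proof.
move=> hF hs hno [s [hu hsz hiff]].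
case: s hu hsz hiff => [|W1 [|W2 [|W3 [|W4 [|? ?]]]]] //= hu _ hiff.
have hQ W : W \in [:: W1; W2; W3; W4] -> Qline_on F W := fun h => (hiff W).1 h.
have h1 := hQ W1 (mem_head _ _).
have h2 : Qline_on F W2 by apply: hQ; rewrite !inE eqxx !orbT.
have h3 : Qline_on F W3 by apply: hQ; rewrite !inE eqxx !orbT.
have : ~~ [&& (W1 :&: W2)%VS == 0%VS, (W1 :&: W3)%VS == 0%VS & (W2 :&: W3)%VS == 0%VS].
  apply/negP => /and3P [/eqP e1 /eqP e2 /eqP e3]; apply: hno.
  by exists W1, W2, W3; split.
rewrite !negb_and => /or3P [c|c|c].
- exact: (finish hs hF hiff hu c).
- have hp : perm_eq [:: W1; W3; W2; W4] [:: W1; W2; W3; W4].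
    by rewrite perm_cons (perm_catCA [:: W3] [:: W2] [:: W4]) perm_refl.
  apply: (finish (B := W3) (X := W2) (Y := W4) hs hF _ _ c).
    by move=> W; rewrite (perm_mem hp); exact: hiff.
  by rewrite (perm_uniq hp).
- have hp : perm_eq [:: W2; W3; W1; W4] [:: W1; W2; W3; W4].
    by rewrite (perm_catCA [:: W2; W3] [:: W1] [:: W4]) perm_refl.
  apply: (finish (A := W2) (B := W3) (X := W1) (Y := W4) hs hF _ _ c).
    by move=> W; rewrite (perm_mem hp); exact: hiff.
  by rewrite (perm_uniq hp).
Qed.
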